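(* Let $M\ge 0$, $\mathcal{M}=\{0,\dots,M\}$, $T\ge 1$, $c_u,c_l>0$, $0\le\beta\le 1$, and let $(B_t)_{t\ge 0}$ be a Markov chain on $\mathcal{M}$ with known stochastic transition matrix $P$ (rows $P_{s,\cdot}$) and known initial state $B_0=s_0$. At each time $t=1,\dots,T$ a decision-maker chooses an action $r_t\in\mathcal{M}$ as a function of $s_0$ and all past actions and observations, incurring cost $C(B_t;r_t)=c_u(r_t-B_t)$ if $r_t>B_t$ and $C(B_t;r_t)=c_l(B_t-r_t)$ if $r_t\le B_t$; if $r_t>B_t$ the value $B_t$ is observed, while if $r_t\le B_t$ only the fact that $B_t\ge r_t$ is observed. Let $W^{opt}_0(s_0)$ be the minimum over all such policies of $\mathbb{E}\{\sum_{t=1}^T\beta^{t-1}C(B_t;r_t)\mid B_0=s_0\}$. For a probability vector $b$ let $\bar C(b;r)=c_l\sum_{i=r}^M b(i)(i-r)+c_u\sum_{i=0}^{r-1}b(i)(r-i)$ and $\pi^{myopic}(b)=\min\{r\in\mathcal{M}:\sum_{i=0}^r b(i)\ge \frac{c_l}{c_l+c_u}\}$, and define for $s\in\mathcal{M}$ $$W^{FO}_{T-1}(s)=\bar C(P_{s,\cdot};\pi^{myopic}(P_{s,\cdot})),$$ $$W^{FO}_t(s)=\bar C(P_{s,\cdot};\pi^{myopic}(P_{s,\cdot}))+\beta\sum_{i=0}^M P_{s,i}\,W^{FO}_{t+1}(i),\quad t=0,\dots,T-2.$$ Then $W^{opt}_0(s_0)\ge W^{FO}_0(s_0)$.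
   Context: $W^{FO}_0(s_0)$ is the expected discounted cost of a genie policy that observes the actual state at every time step with one unit of delay and plays the myopic action. *)

(* Defs.v *)
From HB Require Import structures.
From mathcomp Require Import all_boot all_order all_algebra.
Set Implicit Arguments. Unset Strict Implicit. Unset Printing Implicit Defensive.
Import Order.TTheory GRing.Theory Num.Theory.
Local Open Scope ring_scope.

Section Defs.
Variables (R : realFieldType) (M : nat).
Notation state := 'I_M.+1.

Definition cost (cu cl : R) (b r : state) : R :=
  if (b < r)%N then cu * ((r : nat)%:R - (b : nat)%:R)
  else cl * ((b : nat)%:R - (r : nat)%:R).

(* Observation after playing r when the state is b:
   Some b (exact value) if r > b, None (only "b >= r") otherwise. *)
Definition observe (r b : state) : option state :=
  if (b < r)%N then Some b else None.

(* A (deterministic, history-dependent) policy: given the history of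
   past (action, observation) pairs, choose the next action.
   The initial state s0 is fixed, so dependence on it is implicit. *)
Definition policy := seq (state * option state) -> state.

(* Expected discounted cost of the remaining n steps, given the history
   hist (whose length is the number of elapsed steps t-1) and the
   current (previous-step) state s. Discount beta^(t-1). *)
Fixpoint exp_cost (P : 'M[R]_M.+1) (cu cl beta : R) (pol : policy)
    (n : nat) (hist : seq (state * option state)) (s : state) : R :=
  match n with
  | 0 => 0
  | n'.+1 =>
      let r := pol hist in
      \sum_(j < M.+1) P s j *
        (beta ^+ (size hist) * cost cu cl j r
         + exp_cost P cu cl beta pol n' (rcons hist (r, observe r j)) j)
  end.

Definition policy_cost (P : 'M[R]_M.+1) (cu cl beta : R) (T : nat)
    (pol : policy) (s0 : state) : R :=
  exp_cost P cu cl beta pol T [::] s0.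

Definition Cbar (cu cl : R) (b : state -> R) (r : state) : R :=
  cl * (\sum_(i < M.+1 | (r <= i)%N) b i * ((i : nat)%:R - (r : nat)%:R))
  + cu * (\sum_(i < M.+1 | (i < r)%N) b i * ((r : nat)%:R - (i : nat)%:R)).

Definition myopic_crit (cu cl : R) (b : state -> R) (r : nat) : bool :=
  cl / (cl + cu) <= \sum_(i < M.+1 | (i <= r)%N) b i.

Definition pi_myopic (cu cl : R) (b : state -> R) : state :=
  inord (find (myopic_crit cu cl b) (iota 0 M.+1)).

Definition one_step (P : 'M[R]_M.+1) (cu cl : R) (s : state) : R :=
  Cbar cu cl (P s) (pi_myopic cu cl (P s)).

(* WFO_aux k = W^FO_{T-1-k} *)
Fixpoint WFO_aux (P : 'M[R]_M.+1) (cu cl beta : R) (k : nat) (s : state) : R :=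
  match k with
  | 0 => one_step P cu cl s
  | k'.+1 => one_step P cu cl s
             + beta * \sum_(i < M.+1) P s i * WFO_aux P cu cl beta k' i
  end.

Definition WFO (P : 'M[R]_M.+1) (cu cl beta : R) (T t : nat) (s : state) : R :=
  WFO_aux P cu cl beta (T.-1 - t) s.

End Defs.

(* Main.v *)
Require Import Defs.
From HB Require Import structures.
From mathcomp Require Import all_boot all_order all_algebra.
From mathcomp Require Import ring lra zify.
Import Order.TTheory GRing.Theory Num.Theory.
Local Open Scope ring_scope.

Section Helpers.
Variables (R : realFieldType) (M : nat).
Implicit Types (b : 'I_M.+1 -> R).

Definition Fs b (k : nat) := \sum_(i < M.+1 | (i <= k)%N) b i.

Lemma Cbar_sum (cu cl : R) b r :
  Cbar cu cl b r = \sum_i b i * cost cu cl i r.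
Proof.
rewrite /Cbar [RHS](bigID (fun i : 'I_M.+1 => (r <= i)%N)) /= !mulr_sumr.
rewrite [X in _ + X = _](eq_bigl (fun i : 'I_M.+1 => ~~ (r <= i)%N)); last first.
  by move=> i; rewrite ltnNge.
congr (_ + _); apply: eq_bigr => i Hi; rewrite /cost.
- rewrite (ltnNge i r) Hi /=; ring.
- rewrite -ltnNge in Hi; rewrite Hi; ring.
Qed.

Lemma sum_g (cu cl : R) b k : \sum_i b i = 1 ->
  \sum_i b i * (if (i <= k)%N then cu else -cl) = (cu + cl) * Fs b k - cl.
Proof.
move=> H1.
have H2 : \sum_(i < M.+1 | ~~ (i <= k)%N) b i = 1 - Fs b k.
  rewrite -H1 [in RHS](bigID (fun i : 'I_M.+1 => (i <= k)%N)) /Fs /=; ring.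
rewrite (bigID (fun i : 'I_M.+1 => (i <= k)%N)) /=.
under eq_bigr => i Hi do rewrite Hi.
under [X in _ + X]eq_bigr => i Hi do rewrite (negbTE Hi).
rewrite -!big_distrl /= -/(Fs b k) H2; ring.
Qed.

Lemma costA (cu cl : R) (i r m : 'I_M.+1) : 0 < cu -> 0 < cl -> (m <= r)%N ->
  ((r : nat)%:R - (m : nat)%:R) * (if (i <= m)%N then cu else -cl)
    <= cost cu cl i r - cost cu cl i m.
Proof.
move=> hu hl hmr; rewrite /cost.
have Hmr : (m : nat)%:R <= (r : nat)%:R :> R by rewrite ler_nat.
case: (ltnP i r) => h1; case: (ltnP i m) => h2; case: leqP => h3;
  try (exfalso; lia).
all: move: h1 h2 h3; rewrite -?(ltr_nat R) -?(ler_nat R) => h1 h2 h3.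
all: nra.
Qed.

Lemma costB (cu cl : R) (i r m : 'I_M.+1) : 0 < cu -> 0 < cl -> (r < m)%N ->
  ((r : nat)%:R - (m : nat)%:R) * (if (i <= (m : nat).-1)%N then cu else -cl)
    <= cost cu cl i r - cost cu cl i m.
Proof.
move=> hu hl hmr; rewrite /cost.
have Hmr : (r : nat)%:R < (m : nat)%:R :> R by rewrite ltr_nat.
have -> : (i <= (m : nat).-1)%N = (i < m)%N by lia.
case: (ltnP i r) => h1; case: (ltnP i m) => h2;
  try (exfalso; lia).
all: move: h1 h2; rewrite -?(ltr_nat R) -?(ler_nat R) => h1 h2.
all: nra.
Qed.

Lemma myopic_opt (cu cl : R) b r : 0 < cu -> 0 < cl ->
  (forall i, 0 <= b i) -> \sum_i b i = 1 ->
  Cbar cu cl b (pi_myopic cu cl b) <= Cbar cu cl b r.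
Proof.
move=> hu hl hb h1.
set k := find (myopic_crit cu cl b) (iota 0 M.+1).
have th1 : cl / (cl + cu) <= 1 by rewrite ler_pdivrMr ?mul1r; lra.
have hasc : has (myopic_crit cu cl b) (iota 0 M.+1).
  apply/hasP; exists M; first by rewrite mem_iota; lia.
  rewrite /myopic_crit (eq_bigl xpredT) ?h1 // => i; exact: leq_ord.
have kM : (k < M.+1)%N by rewrite -[M.+1](size_iota 0) -has_find.
have Ck : myopic_crit cu cl b k.
  by have := nth_find 0 hasc; rewrite nth_iota.
have Cb : forall k', (k' < k)%N -> ~~ myopic_crit cu cl b k'.
  move=> k' hk'; have := before_find 0 hk'; rewrite nth_iota ?add0n => [->//|].
  exact: ltn_trans hk' kM.
have vm : (pi_myopic cu cl b : nat) = k by rewrite /pi_myopic inordK.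
set m := pi_myopic cu cl b in vm *.
rewrite !Cbar_sum -subr_ge0 -sumrB.
case: (leqP m r) => hmr.
- apply: le_trans (_ : 0 <= ((r : nat)%:R - (m : nat)%:R) * ((cu + cl) * Fs b m - cl)) _.
    apply: mulr_ge0; first by rewrite subr_ge0 ler_nat.
    move: Ck; rewrite /myopic_crit vm -/(Fs b k) ler_pdivrMr; last lra.
    lra.
  rewrite -sum_g // mulr_sumr; apply: ler_sum => i _.
  rewrite -mulrBr mulrCA; apply: ler_wpM2l; first exact: hb.
  exact: costA.
- have k0 : (0 < k)%N by rewrite -vm; apply: leq_ltn_trans hmr.
  apply: le_trans (_ : 0 <= ((r : nat)%:R - (m : nat)%:R) * ((cu + cl) * Fs b (m : nat).-1 - cl)) _.
    apply: mulr_le0; first by rewrite subr_le0 ler_nat ltnW.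
    have hk1 : (k.-1 < k)%N by lia.
    have := Cb k.-1 hk1.
    rewrite /myopic_crit vm -/(Fs b k.-1) ler_pdivrMr; last lra.
    lra.
  rewrite -sum_g // mulr_sumr; apply: ler_sum => i _.
  rewrite -mulrBr mulrCA; apply: ler_wpM2l; first exact: hb.
  exact: costB.
Qed.

End Helpers.

Lemma exp_costS (R : realFieldType) (M : nat) (P : 'M[R]_M.+1) cu cl beta
  (pol : policy M) n hist s :
  exp_cost P cu cl beta pol n.+1 hist s =
  \sum_(j < M.+1) P s j *
     (beta ^+ (size hist) * cost cu cl j (pol hist)
      + exp_cost P cu cl beta pol n (rcons hist (pol hist, observe (pol hist) j)) j).
Proof. by []. Qed.

Theorem proposition5 (R : realFieldType) (M : nat) (P : 'M[R]_M.+1)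
  (cu cl beta : R) (T : nat) (s0 : 'I_M.+1) :
  (1 <= T)%N -> 0 < cu -> 0 < cl -> 0 <= beta -> beta <= 1 ->
  (forall i j, 0 <= P i j) ->
  (forall i, \sum_(j < M.+1) P i j = 1) ->
  forall pol : policy M,
    WFO P cu cl beta T 0 s0 <= policy_cost P cu cl beta T pol s0.
Proof.
move=> hT hu hl hb0 hb1 hP hP1 pol.
have key : forall n hist s, beta ^+ (size hist) * WFO_aux P cu cl beta n s
    <= exp_cost P cu cl beta pol n.+1 hist s.
  elim=> [|n IH] hist s.
  - rewrite /= /one_step.
    have -> : \sum_(j < M.+1) P s j *
        (beta ^+ size hist * cost cu cl j (pol hist) + 0)
        = beta ^+ size hist * Cbar cu cl (P s) (pol hist).
      rewrite Cbar_sum mulr_sumr; apply: eq_bigr => j _; ring.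
    apply: ler_wpM2l; first exact: exprn_ge0.
    exact: myopic_opt.
  - rewrite exp_costS.
    apply: le_trans (_ : _ <= \sum_(j < M.+1) P s j *
        (beta ^+ size hist * cost cu cl j (pol hist)
         + beta ^+ (size hist).+1 * WFO_aux P cu cl beta n j)) _; last first.
      apply: ler_sum => j _; apply: ler_wpM2l; first exact: hP.
      rewrite lerD2l; have := IH (rcons hist (pol hist, observe (pol hist) j)) j.
      by rewrite size_rcons.
    have -> : \sum_(j < M.+1) P s j *
        (beta ^+ size hist * cost cu cl j (pol hist)
         + beta ^+ (size hist).+1 * WFO_aux P cu cl beta n j)
        = beta ^+ size hist * (Cbar cu cl (P s) (pol hist)
          + beta * \sum_(j < M.+1) P s j * WFO_aux P cu cl beta n j).
      rewrite Cbar_sum mulr_sumr mulrDr mulr_sumr mulr_sumr -big_split /=.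
      apply: eq_bigr => j _; rewrite exprS; ring.
    rewrite [WFO_aux _ _ _ _ _.+1 _]/=.
    apply: ler_wpM2l; first exact: exprn_ge0.
    rewrite lerD2r /one_step; exact: myopic_opt.
rewrite /WFO /policy_cost subn0.
case: T hT key => // T' _ key.
have := key T' [::] s0; rewrite [size [::]]/= expr0 mul1r.
by rewrite [T'.+1.-1]/=.
Qed.
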